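(* Let $P=\sum_{k=1}^K N_k$, $\kappa=2P$, and assume $N_I\ge\kappa$; write $N=N_I$. Let $\mathbf U\in\bar{\mathcal U}$ be such that every square submatrix of $\mathbf M_{\mathbf U}$ is nonsingular. Let $\mathbf a_n^T$ and $\mathbf b_n^T$ ($n=1,\dots,N$) be the rows of $\mathbf M_{\mathbf U}$ and $\boldsymbol\Gamma_{\mathbf U}$, respectively, let $\mathbf A$ be the block matrix $[\mathbf A_{m,n}]_{m,n=1}^N$ with $\mathbf A_{m,n}\in\mathbb R^{\kappa\times\min\{\kappa,N-n+1\}}$, whose $q$-th column is $\mathbf a_{q+n-1}$ if $m=n$, $\mathbf a_n$ if $m=q+n-1\neq n$, and $\mathbf 0$ otherwise, and let $\mathbf b=[\mathbf b_1^T,\dots,\mathbf b_N^T]^T\in\mathbb R^{N\kappa}$. Then $$\operatorname{rank}([\mathbf A\ \ \mathbf b])=N\kappa-\frac{\kappa(\kappa-1)}{2}.$$ (In particular, together with $\operatorname{rank}\mathbf A=N\kappa-\kappa(\kappa-1)/2$, the system $\mathbf A\mathbf x=\mathbf b$ is solvable.)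
   Context: $Z_0>0$, $\mathbf H_r\in\mathbb C^{P\times N_I}$ is arbitrary, $\mathsf i$ is the imaginary unit, and $\mathcal R(\cdot),\mathcal I(\cdot)$ denote entrywise real and imaginary parts. $\bar{\mathcal U}=\{\mathbf U\in\mathbb C^{N_I\times P}:\ \mathbf U^H\mathbf U=\mathbf H_r\mathbf H_r^H,\ \mathbf U^T\mathbf H_r^H=(\mathbf U^T\mathbf H_r^H)^T\}$. For $\mathbf U\in\mathbb C^{N_I\times P}$, $\mathbf M_{\mathbf U}=[\mathcal R(\mathsf iZ_0(\mathbf H_r^H+\mathbf U))\ \ \mathcal I(\mathsf iZ_0(\mathbf H_r^H+\mathbf U))]\in\mathbb R^{N_I\times 2P}$ and $\boldsymbol\Gamma_{\mathbf U}=[\mathcal R(\mathbf U-\mathbf H_r^H)\ \ \mathcal I(\mathbf U-\mathbf H_r^H)]\in\mathbb R^{N_I\times 2P}$. The matrix $\mathbf A$ has $N\kappa$ rows and $N\kappa-\kappa(\kappa-1)/2$ columns; its column indexed by block $n$ and position $q$ corresponds to the variable $B_{n,n+q-1}$ of a real symmetric band matrix $\mathbf B$ with band width $\kappa-1$, and $\mathbf A\mathbf x=\mathbf b$ is the equation $\mathbf B\mathbf M_{\mathbf U}=\boldsymbol\Gamma_{\mathbf U}$ written row by row. *)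

(* Defs.v *)
From HB Require Import structures.
From mathcomp Require Import all_boot all_order all_algebra.
From mathcomp Require Import complex.
Set Implicit Arguments. Unset Strict Implicit. Unset Printing Implicit Defensive.
Import Order.TTheory GRing.Theory Num.Theory.
Local Open Scope ring_scope.

Section Defs.
Variable R : rcfType.
Local Notation C := (complex R).

Definition ctr m n (X : 'M[C]_(m, n)) : 'M[C]_(n, m) := map_mx (fun z : C => (let: Complex a b := z in Complex a (- b))) X^T.

Definition ReM m n (X : 'M[C]_(m, n)) : 'M[R]_(m, n) := map_mx (@complex.Re R) X.
Definition ImM m n (X : 'M[C]_(m, n)) : 'M[R]_(m, n) := map_mx (@complex.Im R) X.

Definition iC : C := Complex 0 1.

Definition in_Ubar P N (Hr : 'M[C]_(P, N)) (U : 'M[C]_(N, P)) : Prop :=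
  ctr U *m U = Hr *m ctr Hr /\ (U^T *m ctr Hr)^T = U^T *m ctr Hr.

Definition M_U P N (Z0 : R) (Hr : 'M[C]_(P, N)) (U : 'M[C]_(N, P)) : 'M[R]_(N, P + P) :=
  let X := (iC * Complex Z0 0) *: (ctr Hr + U) in row_mx (ReM X) (ImM X).

Definition Gamma_U P N (Hr : 'M[C]_(P, N)) (U : 'M[C]_(N, P)) : 'M[R]_(N, P + P) :=
  let X := U - ctr Hr in row_mx (ReM X) (ImM X).

Definition all_square_submx_nonsingular m n (M : 'M[R]_(m, n)) : Prop :=
  forall k (f : 'I_k -> 'I_m) (g : 'I_k -> 'I_n),
    injective f -> injective g -> \det (mxsub f g M) != 0.

(* entry i of the (0-based) k-th row of M, or 0 if k is out of range (never
   used out of range below) *)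
Definition rowent m n (M : 'M[R]_(m, n)) (k : nat) (i : 'I_n) : R :=
  if insub k is Some k' then M k' i else 0.

(* This is the paper's definition shifted to 0-based indices. *)
Definition A_blk N kappa (M : 'M[R]_(N, kappa)) (m n : 'I_N) :
    'M[R]_(kappa, minn kappa (N - n)) :=
  \matrix_(i < kappa, q < minn kappa (N - n))
    if m == n then rowent M (q + n) i
    else if (m : nat) == (q + n)%N then M n i
    else 0.

Definition A_mx N kappa (M : 'M[R]_(N, kappa)) :
    'M[R]_(\sum_(m < N) kappa, \sum_(n < N) minn kappa (N - n)) :=
  \mxblock_(m < N, n < N) A_blk M m n.

Definition b_vec N kappa (G : 'M[R]_(N, kappa)) : 'cV[R]_(\sum_(m < N) kappa) :=
  \mxcol_(m < N) (row m G)^T.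

End Defs.

(* Main.v *)
Require Import Defs.
From HB Require Import structures.
From mathcomp Require Import all_boot all_order all_algebra.
From mathcomp Require Import complex.
From mathcomp Require Import zify ring lra.
Set Implicit Arguments. Unset Strict Implicit. Unset Printing Implicit Defensive.
Import Order.TTheory GRing.Theory Num.Theory.
Local Open Scope ring_scope.

Section Gen.
Variables (R : rcfType) (N k : nat) (M : 'M[R]_(N, k)).

Lemma lt_qm (m : 'I_N) (q : 'I_(minn k (N - m))) : (q + m < N)%N.
Proof. have := ltn_ord q; have := ltn_ord m; lia. Qed.

Definition fq (m : 'I_N) (q : 'I_(minn k (N - m))) : 'I_N := Ordinal (lt_qm q).

Lemma fq_inj m : injective (@fq m).
Proof. move=> a b /(congr1 val) /= /eqP; rewrite eqn_add2r => /eqP ab; exact: val_inj. Qed.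

Lemma A_blk_diag m : A_blk M m m = (rowsub (@fq m) M)^T.
Proof.
apply/matrixP=> i q; rewrite !mxE eqxx /rowent.
case: insubP => [j _ /= Hj|]; last by rewrite lt_qm.
by congr (M _ i); apply: val_inj.
Qed.

Lemma A_blk_up (m n : 'I_N) : (m < n)%N -> A_blk M m n = 0.
Proof.
move=> lt; apply/matrixP=> i q; rewrite !mxE.
have -> : (m == n) = false by apply/eqP => e; move: lt; rewrite e ltnn.
have -> : ((m : nat) == q + n)%N = false by apply/eqP; lia.
by [].
Qed.

Lemma sub_inj (m : 'I_N) (v : 'cV_(minn k (N - m))) :
  all_square_submx_nonsingular M -> A_blk M m m *m v = 0 -> v = 0.
Proof.
move=> hM hv.
pose g := widen_ord (geq_minl k (N - m)).
have gi : injective g by move=> a b /(congr1 val) /= ab; exact: val_inj.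
have := hM _ _ _ (@fq_inj m) gi.
set S := mxsub _ _ _ => dS.
have uS : S^T \in unitmx by rewrite unitmx_tr unitmxE unitfE.
have e : S^T *m v = 0.
  have -> : S^T = rowsub g (A_blk M m m).
    by rewrite A_blk_diag; apply/matrixP=> i j; rewrite !mxE.
  by rewrite mul_rowsub_mx hv; apply/matrixP=> i j; rewrite !mxE.
by rewrite -(mulKmx uS v) e mulmx0.
Qed.

Lemma A_inj (x : 'cV_(\sum_(n < N) minn k (N - n))) :
  all_square_submx_nonsingular M -> A_mx M *m x = 0 -> x = 0.
Proof.
move=> hM.
rewrite -(submxcolK x) /A_mx mul_mxblock_mxrow => Heq.
have H : forall i, \sum_j A_blk M i j *m submxcol x j = 0.
  move=> i; have := congr1 (fun A => submxcol A i) Heq.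
  by rewrite mxcolK submxcol0.
have ind : forall t (i : 'I_N), (i < t)%N -> submxcol x i = 0.
  elim=> [//|t IH] i lti.
  case: (ltnP i t) => [|ge]; first exact: IH.
  apply: (sub_inj hM).
  rewrite -(H i) (bigD1 i) //= big1 ?addr0 // => j ji.
  case: (ltngtP i j) => [lt|lt|e]; last by move: ji; rewrite (val_inj e) eqxx.
    by rewrite A_blk_up // mul0mx.
  by rewrite IH ?mulmx0 //; lia.
transitivity (\mxcol_(i < N) (0 : 'cV[R]_(minn k (N - i)))); last by rewrite mxcol0.
by apply: eq_mxcol => i; apply: (ind i.+1).
Qed.

Lemma rank_inj r c (A : 'M[R]_(r, c)) : (forall x : 'cV_c, A *m x = 0 -> x = 0) -> \rank A = c.
Proof.
move=> hA; rewrite -mxrank_tr.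
have : row_free A^T.
  rewrite -kermx_eq0; apply/eqP; apply/row_matrixP => i.
  rewrite row0; set u := row i _.
  have : u *m A^T = 0 by apply/sub_kermxP; rewrite row_sub.
  move=> /(congr1 trmx); rewrite trmx_mul trmxK trmx0 => /hA /(congr1 trmx).
  by rewrite trmxK trmx0.
by move/eqP.
Qed.

End Gen.

Section Gen2.
Variables (R : rcfType) (N k : nat) (M : 'M[R]_(N, k)).
Definition Sp := [set p : 'I_k * 'I_k | (p.1 < p.2)%N].
Definition pr (j : 'I_#|Sp|) : 'I_k * 'I_k := enum_val j.
Lemma pr_lt j : ((pr j).1 < (pr j).2)%N.
Proof. by have := enum_valP j; rewrite inE. Qed.

Definition Phi_m (m : 'I_N) : 'M[R]_(#|Sp|, k) :=
  \matrix_(j, l) ((l == (pr j).2)%:R * M m (pr j).1 - (l == (pr j).1)%:R * M m (pr j).2).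
Definition Phi : 'M[R]_(#|Sp|, \sum_(m < N) k) := \mxrow_(m < N) Phi_m m.

Lemma sum_delta (v : 'I_k -> R) p : \sum_l (l == p)%:R * v l = v p.
Proof. by rewrite (bigD1 p) //= eqxx mul1r big1 ?addr0 // => l /negbTE ->; rewrite mul0r. Qed.

Lemma phi_apply (v : 'I_k -> R) x y p1 p2 :
  \sum_l ((l == p2)%:R * x - (l == p1)%:R * y) * v l = x * v p2 - y * v p1.
Proof.
rewrite (eq_bigr (fun l => (l == p2)%:R * (x * v l) - (l == p1)%:R * (y * v l))); last first.
  by move=> l _; ring.
by rewrite sumrB (sum_delta (fun l => x * v l)) (sum_delta (fun l => y * v l)).
Qed.

Lemma Phi_A : Phi *m A_mx M = 0.
Proof.
rewrite /Phi /A_mx mul_mxrow_mxblock.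
transitivity (\mxrow_(j < N) (0 : 'M[R]_(#|Sp|, minn k (N - j)))); last by rewrite mxrow0.
apply: eq_mxrow => j; apply/matrixP => a q; rewrite summxE mxE.
under eq_bigr do rewrite mxE; under eq_bigr do under eq_bigr do rewrite !mxE.
under eq_bigr do rewrite phi_apply.
rewrite (bigD1 j) //= eqxx.
have rj : forall l, rowent M (q + j) l = M (fq q) l.
  move=> l; rewrite /rowent; case: insubP => [u _ /= Hu|]; last by rewrite lt_qm.
  by congr (M _ l); apply: val_inj.
rewrite !rj.
have [q0|qpos] := eqVneq (q : nat) 0%N.
  rewrite big1 ?addr0; last first.
    move=> i ij; rewrite (negbTE ij); have -> : ((i : nat) == q + j)%N = false.
      apply/eqP => e; rewrite q0 add0n in e.
      by move: ij; rewrite (_ : i = j) ?eqxx //; apply: val_inj.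
    by rewrite !mulr0 subrr.
  have fj : fq q = j by apply: val_inj; rewrite /= q0.
  by rewrite fj mulrC subrr.
have fnj : fq q != j.
  by apply/eqP => /(congr1 val) /= e; move: qpos e; set qq := nat_of_ord q; set jj := nat_of_ord j; lia.
rewrite (bigD1 (fq q)) //= (negbTE fnj) eqxx big1 ?addr0; last first.
  move=> i /andP [ij ifq]; rewrite (negbTE ij).
  have -> : ((i : nat) == q + j)%N = false.
    by apply/eqP => e; move: ifq; rewrite (_ : i = fq q) ?eqxx //; apply: val_inj.
  by rewrite !mulr0 subrr.
ring.
Qed.

Lemma Phi_b (G : 'M[R]_(N, k)) : (M^T *m G)^T = M^T *m G -> Phi *m b_vec G = 0.
Proof.
move=> sym; rewrite /Phi /b_vec mul_mxrow_mxcol.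
apply/matrixP => a z; rewrite summxE mxE.
under eq_bigr do rewrite mxE; under eq_bigr do under eq_bigr do rewrite !mxE.
under eq_bigr do rewrite (phi_apply (fun l => G _ l)).
rewrite sumrB.
have := congr1 (fun A : 'M[R]_k => A (pr a).1 (pr a).2) sym; rewrite !mxE => e.
move: e; under eq_bigr do rewrite mxE; under [in X in _ = X -> _]eq_bigr do rewrite mxE.
by move=> ->; rewrite subrr.
Qed.


Section E.
Variable hk : (k <= N)%N.
Let f := widen_ord hk.
Hypothesis hdet : \det (rowsub f M) != 0.
Definition W : 'M[R]_(N, k) := (rowsub f (1%:M : 'M[R]_N))^T *m invmx ((rowsub f M)^T).
Lemma MtW : M^T *m W = 1%:M.
Proof.
rewrite /W mulmxA -trmx_mul mul_rowsub_mx mul1mx mulmxV //.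
by rewrite unitmx_tr unitmxE unitfE.
Qed.
Definition E_m (m : 'I_N) : 'M[R]_(k, #|Sp|) :=
  \matrix_(l, j) ((l == (pr j).2)%:R * W m (pr j).1).
Definition E : 'M[R]_(\sum_(m < N) k, #|Sp|) := \mxcol_(m < N) E_m m.

Lemma PhiE : Phi *m E = 1%:M.
Proof.
rewrite /Phi /E mul_mxrow_mxcol; apply/matrixP => a b; rewrite summxE mxE.
under eq_bigr do rewrite mxE; under eq_bigr do under eq_bigr do rewrite [Phi_m _ _ _]mxE [E_m _ _ _]mxE.
under eq_bigr => i _ do rewrite (phi_apply (fun l => (l == (pr b).2)%:R * W i (pr b).1)).
rewrite sumrB.
under eq_bigr do rewrite mulrCA; under [X in _ - X]eq_bigr do rewrite mulrCA.
rewrite -!mulr_sumr.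
have e : forall u v, \sum_i M i u * W i v = (u == v)%:R.
  move=> u v; rewrite (_ : (u == v)%:R = (1%:M : 'M[R]_k) u v); last by rewrite mxE.
  rewrite -MtW mxE.
  by under [RHS]eq_bigr do rewrite mxE.
rewrite !e.
have := pr_lt a; have := pr_lt b.
have [->|ab] := eqVneq a b.
  rewrite !eqxx mulr1.
  by case: eqP => [->|]; rewrite ?ltnn // mul0r subr0.
have : pr a != pr b by apply: contra ab => /eqP /enum_val_inj ->.
case: (pr a) => [p1 p2]; case: (pr b) => [q1 q2] /= neq.
move=> lq lp.
have h1 : ((p2 == q2) && (p1 == q1)) = false.
  by apply: contraNF neq => /andP [/eqP -> /eqP ->].
have h2 : ((p1 == q2) && (p2 == q1)) = false.
  by apply/negP => /andP [/eqP e3 /eqP e4]; move: lq lp; rewrite e3 e4; lia.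
by rewrite -!natrM !mulnb h1 h2 subrr.
Qed.

Lemma rank_Phi : \rank Phi = #|Sp|.
Proof.
apply/eqP; rewrite eqn_leq rank_leq_row /=.
by rewrite -{1}(mxrank1 R #|Sp|) -PhiE mxrankM_maxl.
Qed.
End E.

End Gen2.

Local Open Scope nat_scope.
Lemma card_pairs k : #|[set p : 'I_k * 'I_k | (p.1 < p.2)%N]| = \sum_(i < k) (k - i.+1).
Proof.
rewrite -sum1_card.
rewrite (eq_bigl (fun p : 'I_k * 'I_k => true && (p.1 < p.2))); last by move=> p; rewrite inE.
rewrite -(pair_big_dep (I := 'I_k) (J := 'I_k) xpredT (fun i j => (i < j)%N) (fun i j => 1%N)) /=.
apply: eq_bigr => i _.
transitivity (\sum_(i.+1 <= j < k) 1)%N; last by rewrite sum_nat_const_nat muln1.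
by rewrite big_geq_mkord; apply: eq_bigl.
Qed.

Lemma tri k : ((\sum_(i < k) (k - i.+1)) * 2 = k * (k - 1))%N.
Proof.
elim: k => [|k IH]; first by rewrite big_ord0.
rewrite big_ord_recl /=.
rewrite (eq_bigr (fun i : 'I_k => k - i.+1)%N); last by move=> i _; rewrite /bump /= subSS.
rewrite mulnDl IH subSS subn0; case: (k) => [|j] /=; nia.
Qed.

Lemma sum_min N k : (k <= N)%N ->
  (\sum_(n < N) minn k (N - n) + \sum_(i < k) (k - i.+1) = N * k)%N.
Proof.
move=> hk.
have e1 : (N * k = \sum_(n < N) (minn k (N - n) + (k - (N - n))))%N.
  rewrite -[in LHS](card_ord N) -sum_nat_const; apply: eq_bigr => n _; lia.
rewrite e1 big_split /=; congr (_ + _)%N.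
rewrite (reindex_inj (@rev_ord_inj N)) /=.
rewrite (eq_bigr (fun n : 'I_N => k - n.+1)%N); last first.
  move=> n _; have := ltn_ord n; lia.
rewrite (big_ord_widen N (fun n => k - n.+1)%N hk).
rewrite big_mkcond /=; apply: eq_bigr => n _.
case: ifP => //. lia.
Qed.

Local Open Scope ring_scope.
Section Cplx.
Variable R : rcfType.
Local Notation C := (complex R).

Lemma ctrE m n (A : 'M[C]_(m, n)) i j : ctr A i j = conjc (A j i).
Proof. by rewrite !mxE. Qed.

Lemma ctrD m n (A B : 'M[C]_(m, n)) : ctr (A + B) = ctr A + ctr B.
Proof. by apply/matrixP => i j; rewrite !(ctrE, mxE) rmorphD. Qed.
Lemma ctrN m n (A : 'M[C]_(m, n)) : ctr (- A) = - ctr A.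
Proof. by apply/matrixP => i j; rewrite !(ctrE, mxE) rmorphN. Qed.
Lemma ctrB m n (A B : 'M[C]_(m, n)) : ctr (A - B) = ctr A - ctr B.
Proof. by rewrite ctrD ctrN. Qed.
Lemma ctrZ m n c (A : 'M[C]_(m, n)) : ctr (c *: A) = conjc c *: ctr A.
Proof. by apply/matrixP => i j; rewrite !(ctrE, mxE) rmorphM. Qed.
Lemma ctrK m n (A : 'M[C]_(m, n)) : ctr (ctr A) = A.
Proof. by apply/matrixP => i j; rewrite !ctrE conjcK. Qed.
Lemma ctrM m n p (A : 'M[C]_(m, n)) (B : 'M[C]_(n, p)) : ctr (A *m B) = ctr B *m ctr A.
Proof.
apply/matrixP => i j; rewrite ctrE !mxE rmorph_sum; apply: eq_bigr => l _.
by rewrite rmorphM !ctrE mulrC.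
Qed.

Local Notation CRe := (@complex.Re R).
Local Notation CIm := (@complex.Im R).
Lemma ReD (x y : C) : CRe (x + y) = CRe x + CRe y. Proof. by case: x => a b; case: y => c d; reflexivity. Qed.
Lemma ImD (x y : C) : CIm (x + y) = CIm x + CIm y. Proof. by case: x => a b; case: y => c d; reflexivity. Qed.
Lemma Re_sum (I : finType) (F : I -> C) : CRe (\sum_i F i) = \sum_i CRe (F i).
Proof. exact: (big_morph _ ReD). Qed.
Lemma Im_sum (I : finType) (F : I -> C) : CIm (\sum_i F i) = \sum_i CIm (F i).
Proof. exact: (big_morph _ ImD). Qed.
Lemma Re_mul (x y : C) : CRe (x * y) = CRe x * CRe y - CIm x * CIm y. Proof. by case: x => a b; case: y => c d; reflexivity. Qed.
Lemma Im_mul (x y : C) : CIm (x * y) = CRe x * CIm y + CIm x * CRe y. Proof. by case: x => a b; case: y => c d; reflexivity. Qed.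
Lemma ReJM (x y : C) : CRe (conjc x * y) = CRe x * CRe y + CIm x * CIm y.
Proof. case: x => a b; case: y => c d /=; ring. Qed.
Lemma ImJM (x y : C) : CIm (conjc x * y) = CRe x * CIm y - CIm x * CRe y.
Proof. case: x => a b; case: y => c d /=; ring. Qed.

Lemma ReT m n (A B : 'M[C]_(m, n)) a b :
  CRe ((A^T *m B) a b) = \sum_i CRe (A i a) * CRe (B i b) - \sum_i CIm (A i a) * CIm (B i b).
Proof. rewrite mxE Re_sum -sumrB; apply: eq_bigr => i _; by rewrite mxE Re_mul. Qed.
Lemma ImT m n (A B : 'M[C]_(m, n)) a b :
  CIm ((A^T *m B) a b) = \sum_i CRe (A i a) * CIm (B i b) + \sum_i CIm (A i a) * CRe (B i b).
Proof. rewrite mxE Im_sum -big_split; apply: eq_bigr => i _; by rewrite mxE Im_mul. Qed.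
Lemma ReH m n (A B : 'M[C]_(m, n)) a b :
  CRe ((ctr A *m B) a b) = \sum_i CRe (A i a) * CRe (B i b) + \sum_i CIm (A i a) * CIm (B i b).
Proof. rewrite mxE Re_sum -big_split; apply: eq_bigr => i _; by rewrite ctrE ReJM. Qed.
Lemma ImH m n (A B : 'M[C]_(m, n)) a b :
  CIm ((ctr A *m B) a b) = \sum_i CRe (A i a) * CIm (B i b) - \sum_i CIm (A i a) * CRe (B i b).
Proof. rewrite mxE Im_sum -sumrB; apply: eq_bigr => i _; by rewrite ctrE ImJM. Qed.
Lemma Re_ctr m n (A : 'M[C]_(m, n)) a b : CRe (ctr A a b) = CRe (A b a).
Proof. by rewrite ctrE; case: (A b a). Qed.
Lemma Im_ctr m n (A : 'M[C]_(m, n)) a b : CIm (ctr A a b) = - CIm (A b a).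
Proof. by rewrite ctrE; case: (A b a). Qed.
Lemma trE m n (A : 'M[C]_(m, n)) a b : A^T a b = A b a.
Proof. by rewrite mxE. Qed.
Lemma entry2 m n (f g : C -> R) (A B : 'M[C]_(m, n)) a b :
  ((map_mx f A)^T *m map_mx g B) a b = \sum_i f (A i a) * g (B i b).
Proof. by rewrite mxE; apply: eq_bigr => i _; rewrite !mxE. Qed.

Section Ubar.
Variables (P N : nat) (Z0 : R) (Hr : 'M[C]_(P, N)) (U : 'M[C]_(N, P)).
Hypothesis hU : in_Ubar Hr U.
Let c : C := iC R * Complex Z0 0.
Let X : 'M[C]_(N, P) := c *: (ctr Hr + U).
Let Y : 'M[C]_(N, P) := U - ctr Hr.

Lemma conj_c : conjc c = - c.
Proof. rewrite /c /iC; apply/eqP; rewrite eq_complex /=; apply/andP; split; apply/eqP; ring. Qed.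

Lemma S1 : (X^T *m Y)^T = X^T *m Y.
Proof.
case: hU => _ h2.
have h2' : (ctr Hr)^T *m U = U^T *m ctr Hr by rewrite -h2 trmx_mul trmxK.
have e : X^T *m Y = c *: (U^T *m U - (ctr Hr)^T *m ctr Hr).
  rewrite /X /Y linearZ /= -scalemxAl [(ctr Hr + U)^T]linearD /= mulmxDl !mulmxBr h2'.
  by rewrite addrC addrA subrK.
by rewrite e linearZ /= linearB /= !trmx_mul !trmxK.
Qed.

Lemma S2 : ctr (ctr X *m Y) = ctr X *m Y.
Proof.
case: hU => h1 _.
have e : ctr X *m Y = (- c) *: (Hr *m U - ctr U *m ctr Hr).
  rewrite /X /Y ctrZ conj_c ctrD ctrK -scalemxAl mulmxDl !mulmxBr h1.
  by rewrite addrA subrK.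
have cc : conjc (- c) = c by rewrite -conj_c conjcK.
rewrite e ctrZ cc ctrB !ctrM !ctrK.
by rewrite -opprB scalerN -scaleNr.
Qed.

Lemma facts a b :
  let X := X in let Y := Y in
  [/\ \sum_i CRe (X i b) * CRe (Y i a) - \sum_i CIm (X i b) * CIm (Y i a)
      = \sum_i CRe (X i a) * CRe (Y i b) - \sum_i CIm (X i a) * CIm (Y i b),
      \sum_i CRe (X i b) * CIm (Y i a) + \sum_i CIm (X i b) * CRe (Y i a)
      = \sum_i CRe (X i a) * CIm (Y i b) + \sum_i CIm (X i a) * CRe (Y i b),
      \sum_i CRe (X i b) * CRe (Y i a) + \sum_i CIm (X i b) * CIm (Y i a)
      = \sum_i CRe (X i a) * CRe (Y i b) + \sum_i CIm (X i a) * CIm (Y i b) &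
      - (\sum_i CRe (X i b) * CIm (Y i a) - \sum_i CIm (X i b) * CRe (Y i a))
      = \sum_i CRe (X i a) * CIm (Y i b) - \sum_i CIm (X i a) * CRe (Y i b)].
Proof.
move=> X' Y'.
have s1 := S1; have s2 := S2.
have e1 := congr1 (fun A : 'M[C]_P => CRe (A a b)) s1.
have e2 := congr1 (fun A : 'M[C]_P => CIm (A a b)) s1.
have e3 := congr1 (fun A : 'M[C]_P => CRe (A a b)) s2.
have e4 := congr1 (fun A : 'M[C]_P => CIm (A a b)) s2.
move: e1 e2 e3 e4 => /=; rewrite !trE !ReT !ImT Re_ctr Im_ctr !ReH !ImH.
by move=> *; split.
Qed.

Lemma MtG_sym : let M := M_U Z0 Hr U in let G := Gamma_U Hr U in
  (M^T *m G)^T = M^T *m G.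
Proof.
move=> M G.
rewrite /M /G /M_U /Gamma_U -/c -/X -/Y /ReM /ImM.
rewrite tr_row_mx mul_col_row tr_block_mx; congr block_mx;
  apply/matrixP => a b; rewrite [LHS]mxE !entry2;
  case: (facts a b) => /= f1 f2 f3 f4; lra.
Qed.
End Ubar.
End Cplx.

Theorem lemma3 (R : rcfType) (K : nat) (Nk : 'I_K -> nat) (N : nat)
    (Z0 : R) (Hr : 'M[complex R]_(\sum_(k < K) Nk k, N))
    (U : 'M[complex R]_(N, \sum_(k < K) Nk k)) :
  let P := (\sum_(k < K) Nk k)%N in
  let kappa := (P + P)%N in
  0 < Z0 ->
  (kappa <= N)%N ->
  in_Ubar Hr U ->
  all_square_submx_nonsingular (M_U Z0 Hr U) ->
  \rank (row_mx (A_mx (M_U Z0 Hr U)) (b_vec (Gamma_U Hr U)))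
    = (N * kappa - kappa * (kappa - 1) %/ 2)%N.
Proof.
move=> P kappa _ hk hU hM.
have sym := MtG_sym Z0 hU.
move: hM sym.
set M := M_U Z0 Hr U; set G := Gamma_U Hr U => hM sym.
set A := A_mx M; set b := b_vec G.
have rA : \rank A = (\sum_(n < N) minn kappa (N - n))%N.
  by apply: rank_inj => x; apply: A_inj.
have hdet : \det (rowsub (widen_ord hk) M) != 0.
  apply: hM => [x y /(congr1 val) /= e|x y //]; exact: val_inj.
have rPhi := rank_Phi hdet.
have PA : Phi M *m A = 0 := Phi_A M.
have Pb : Phi M *m b = 0 := Phi_b sym.
have lo : (\rank A <= \rank (row_mx A b))%N.
  rewrite -(mxrank_tr (row_mx A b)) tr_row_mx -mxrank_tr.
  apply: mxrankS.
  have e : A^T = row_mx 1%:M 0 *m col_mx A^T b^T.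
    by rewrite mul_row_col mul1mx mul0mx addr0.
  rewrite {1}e; exact: submxMl.
have hi : (\rank (row_mx A b) <= (\sum_(m < N) kappa) - #|Sp kappa|)%N.
  rewrite -(mxrank_tr (row_mx A b)) tr_row_mx -rPhi -(mxrank_tr (Phi M)) -mxrank_ker.
  apply: mxrankS; apply/sub_kermxP.
  by rewrite mul_col_mx -!trmx_mul PA Pb !trmx0 col_mx0.
move: (\rank (row_mx A b)) lo hi => r lo hi.
have e : (\sum_(m < N) kappa = N * kappa)%N by rewrite sum_nat_const card_ord.
rewrite rA in lo; rewrite e in hi.
have s1 := sum_min hk.
have s2 := card_pairs kappa.
have s3 := tri kappa.
rewrite -s3 mulnK //.
move: s1 hi lo; rewrite -s2; rewrite /Sp; lia.
Qed.
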